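(* Let $\Pi$ be a finite ground disjunctive logic program (viewed as a set of propositional formulas) that has at least one equilibrium model (answer set), and let $V\subseteq V(\Pi)$. Then there is a finite disjunctive program $\Pi'$ with $V(\Pi')\subseteq V$ such that $\Pi\mathbin{|\!\sim}\psi$ for every $\psi\in\Pi'$, and for every formula $\varphi$ that is a conjunction of literals over $V$, if $\Pi\mathbin{|\!\sim}\varphi$ then $\Pi'\mathbin{|\!\sim}\varphi$.
   Context: A ground disjunctive rule $K_1\lor\dots\lor K_k\leftarrow L_1,\dots,L_m,not\,L_{m+1},\dots,not\,L_n$ (all $K_j,L_i$ atoms) is identified with the propositional formula $L_1\land\dots\land L_m\land\neg L_{m+1}\land\dots\land\neg L_n\to K_1\lor\dots\lor K_k$; a disjunctive program is a finite set of such rules. A literal is an atom $a$ or its negation $\neg a$. $V(\cdot)$ is the set of atoms occurring. Here-and-there logic $\mathbf{HT}(W)$ over atom set $W$: interpretations are pairs $\langle H,T\rangle$, $H\subseteq T\subseteq W$, viewed as two-world Kripke models ($h\le t$; atoms true at $h$: $H$, at $t$: $T$) with intuitionistic Kripke clauses, $\neg\varphi:=\varphi\to\bot$; $\mathcal M\models\varphi$ iff $\varphi$ true at both worlds. An equilibrium model of $\Pi$ over $W$ is a model $\langle T,T\rangle$ of $\Pi$ with no model $\langle H,T\rangle$ of $\Pi$ with $H\subsetneq T$ (for disjunctive programs, $\langle T,T\rangle$ is an equilibrium model iff $T$ is an answer set). Entailment $\mathbin{|\!\sim}$ (closed-world): if $\Pi$ is non-empty and has equilibrium models, $\Pi\mathbin{|\!\sim}\varphi$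 iff every equilibrium model of $\Pi$ over $V(\Pi)\cup V(\varphi)$ satisfies $\varphi$; otherwise $\Pi\mathbin{|\!\sim}\varphi$ iff $\varphi$ holds in every $\mathbf{HT}$-model of $\Pi$. *)

(* Defs.v *)
From Stdlib Require Import List.
Import ListNotations.

Definition atom := nat.

Inductive form : Type :=
| FAtom : atom -> form
| FBot : form
| FAnd : form -> form -> form
| FOr : form -> form -> form
| FImp : form -> form -> form.

Definition FNeg (f : form) : form := FImp f FBot.
Definition FTop : form := FImp FBot FBot.

Fixpoint atoms (f : form) : list atom :=
  match f with
  | FAtom a => [a]
  | FBot => []
  | FAnd g h | FOr g h | FImp g h => atoms g ++ atoms h
  end.

Fixpoint sat_t (T : atom -> Prop) (f : form) : Prop :=
  match f with
  | FAtom a => T a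
  | FBot => False
  | FAnd g h => sat_t T g /\ sat_t T h
  | FOr g h => sat_t T g \/ sat_t T h
  | FImp g h => sat_t T g -> sat_t T h
  end.

(* Truth at the world h (atoms true there: H), h <= t; intuitionistic clause
   for implication quantifies over the worlds h and t. *)
Fixpoint sat_h (H T : atom -> Prop) (f : form) : Prop :=
  match f with
  | FAtom a => H a
  | FBot => False
  | FAnd g k => sat_h H T g /\ sat_h H T k
  | FOr g k => sat_h H T g \/ sat_h H T k
  | FImp g k => (sat_h H T g -> sat_h H T k) /\ (sat_t T g -> sat_t T k)
  end.

Definition ht_sat (H T : atom -> Prop) (f : form) : Prop :=
  sat_h H T f /\ sat_t T f.

Definition ht_interp (W : list atom) (H T : atom -> Prop) : Prop :=
  (forall a, H a -> T a) /\ (forall a, T a -> In a W).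

(* Ground disjunctive rules  K1 v ... v Kk <- L1,...,Lm, not L(m+1),...,not Ln *)
Record rule : Type := mkRule {
  head : list atom;
  pos : list atom;
  neg : list atom
}.

Definition program := list rule.

Definition big_and (l : list form) : form := fold_right FAnd FTop l.
Definition big_or (l : list form) : form := fold_right FOr FBot l.

Definition rule_form (r : rule) : form :=
  FImp (big_and (map FAtom (pos r) ++ map (fun a => FNeg (FAtom a)) (neg r)))
       (big_or (map FAtom (head r))).

Definition rule_atoms (r : rule) : list atom := head r ++ pos r ++ neg r.

Definition prog_atoms (P : program) : list atom := flat_map rule_atoms P.

Definition ht_model (P : program) (H T : atom -> Prop) : Prop :=
  forall r, In r P -> ht_sat H T (rule_form r).

Definition eq_model (P : program) (W : list atom) (T : atom -> Prop) : Prop :=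
  ht_interp W T T /\ ht_model P T T /\
  ~ (exists H : atom -> Prop,
        (forall a, H a -> T a) /\ (exists a, T a /\ ~ H a) /\ ht_model P H T).

Definition has_eq_model (P : program) (W : list atom) : Prop :=
  exists T, eq_model P W T.

(* Closed-world entailment P |~ phi, with W = V(P) u V(phi). *)
Definition entails (P : program) (f : form) : Prop :=
  let W := prog_atoms P ++ atoms f in
  (P <> [] /\ has_eq_model P W ->
     forall T, eq_model P W T -> ht_sat T T f) /\
  (~ (P <> [] /\ has_eq_model P W) ->
     forall H T, ht_interp W H T -> ht_model P H T -> ht_sat H T f).

Definition literal : Type := (atom * bool)%type. (* true = a, false = ~a *)

Definition lit_form (l : literal) : form :=
  if snd l then FAtom (fst l) else FNeg (FAtom (fst l)).

Fixpoint conj_lits (ls : list literal) : form :=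
  match ls with
  | [] => FTop
  | [l] => lit_form l
  | l :: ls' => FAnd (lit_form l) (conj_lits ls')
  end.

(* Main.v *)
Require Import Defs.
From Stdlib Require Import List Classical.
Import ListNotations.

Definition lit_true (T : atom -> Prop) (l : literal) : Prop :=
  if snd l then T (fst l) else ~ T (fst l).

Definition rule_of (l : literal) : rule :=
  if snd l then mkRule [fst l] [] [] else mkRule [] [fst l] [].

Lemma sat_hT : forall T f, sat_h T T f <-> sat_t T f.
Proof.
  intros T f; induction f; simpl; try tauto;
  rewrite IHf1, IHf2; tauto.
Qed.

Lemma lit_form_sat : forall T l, sat_t T (lit_form l) <-> lit_true T l.
Proof. intros T [a []]; unfold rule_form, rule_of, big_and, big_or, FTop, lit_true; simpl; tauto. Qed.

Lemma conj_cons2 : forall l l' ls,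
  conj_lits (l :: l' :: ls) = FAnd (lit_form l) (conj_lits (l' :: ls)).
Proof. reflexivity. Qed.

Lemma conj_sat : forall T ls,
  sat_t T (conj_lits ls) <-> (forall l, In l ls -> lit_true T l).
Proof.
  intros T ls; induction ls as [|l ls IH].
  - simpl; split; [intros _ l []| tauto].
  - destruct ls as [|l' ls'].
    + change (conj_lits [l]) with (lit_form l). rewrite lit_form_sat.
      split; [intros H x [<-|[]]; exact H| intros H; apply H; simpl; auto].
    + rewrite conj_cons2. cbn [sat_t]. rewrite lit_form_sat, IH.
      split.
      * intros [H1 H2] x [<-|Hx]; auto.
      * intros H; split; [apply H; simpl; auto| intros x Hx; apply H; right; exact Hx].
Qed.

Lemma conj_atoms : forall ls a, In a (atoms (conj_lits ls)) ->
  exists l, In l ls /\ fst l = a.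
Proof.
  intros ls a; induction ls as [|l ls IH].
  - simpl; tauto.
  - destruct ls as [|l' ls'].
    + change (conj_lits [l]) with (lit_form l).
      intros H; exists l; split; [left; reflexivity|]; destruct l as [b []]; simpl in H; destruct H as [<-|[]]; reflexivity.
    + rewrite conj_cons2. cbn [atoms]. intros H. apply in_app_iff in H.
      destruct H as [H|H].
      * exists l; split; [left; reflexivity|].
        destruct l as [b []]; simpl in H; destruct H as [<-|[]]; reflexivity.
      * destruct (IH H) as [x [Hx Hx']]; exists x; split; [right|]; auto.
Qed.

Lemma rule_sat : forall T l, sat_t T (rule_form (rule_of l)) <-> lit_true T l.
Proof. intros T [a []]; unfold rule_form, rule_of, big_and, big_or, FTop, lit_true; simpl; tauto. Qed.

Lemma eq_model_W : forall P W W' T, (forall a, In a W <-> In a W') ->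
  eq_model P W T -> eq_model P W' T.
Proof.
  intros P W W' T HW [[H1 H2] H3]. split; [split|]; auto.
  intros a Ha; apply HW; auto.
Qed.

Lemma entails_iff : forall P f, P <> [] -> has_eq_model P (prog_atoms P) ->
  incl (atoms f) (prog_atoms P) ->
  (entails P f <-> forall T, eq_model P (prog_atoms P) T -> sat_t T f).
Proof.
  intros P f HP [T0 HT0] Hinc.
  assert (HW : forall a, In a (prog_atoms P) <-> In a (prog_atoms P ++ atoms f)).
  { intro a; rewrite in_app_iff; split; [auto| intros [H|H]; auto]. }
  assert (HW' : forall a, In a (prog_atoms P ++ atoms f) <-> In a (prog_atoms P)).
  { intro a; rewrite HW; tauto. }
  unfold entails; split.
  - intros [H1 _] T HT. apply (proj2 (H1 (conj HP (ex_intro _ T0 (eq_model_W _ _ _ _ HW HT0))) T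
      (eq_model_W _ _ _ _ HW HT))).
  - intros H. split.
    + intros _ T HT. split; [apply sat_hT|]; apply H; eapply eq_model_W; eauto.
    + intros Hn. exfalso; apply Hn; split; auto.
      exists T0; eapply eq_model_W; eauto.
Qed.

Lemma entails_of_eq : forall P f T0, P <> [] ->
  eq_model P (prog_atoms P ++ atoms f) T0 ->
  (forall T, eq_model P (prog_atoms P ++ atoms f) T -> sat_t T f) ->
  entails P f.
Proof.
  intros P f T0 HP H0 H. unfold entails; split.
  - intros _ T HT. split; [apply sat_hT|]; apply H; auto.
  - intros Hn. exfalso; apply Hn; split; auto; exists T0; auto.
Qed.

Lemma filter_ex : forall (good : literal -> Prop) xs,
  exists ys, forall x, In x ys <-> In x xs /\ good x.
Proof.
  intros good xs; induction xs as [|x xs [ys Hys]].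
  - exists []; simpl; tauto.
  - destruct (classic (good x)) as [g|g]; [exists (x :: ys) | exists ys];
      intro y; simpl; rewrite Hys; split.
    + intros [<-|H]; tauto.
    + intros [[<-|H] G]; tauto.
    + tauto.
    + intros [[<-|H] G]; tauto.
Qed.

Theorem proposition7 (P : program) (V : list atom) :
  has_eq_model P (prog_atoms P) ->
  incl V (prog_atoms P) ->
  exists P' : program,
    incl (prog_atoms P') V /\
    (forall r, In r P' -> entails P (rule_form r)) /\
    (forall ls : list literal,
        ls <> [] ->
        (forall l, In l ls -> In (fst l) V) ->
        entails P (conj_lits ls) -> entails P' (conj_lits ls)).
Proof.
  intros Hhas Hincl.
  destruct (classic (P = [])) as [HP|HP].
  - subst. exists []. split; [intros a Ha; inversion Ha|]. split; [intros r []|].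
    intros ls Hne HV _. destruct ls as [|l ls]; [congruence|].
    specialize (HV l (or_introl eq_refl)). apply Hincl in HV; simpl in HV; contradiction.
  - set (good := fun l => forall T, eq_model P (prog_atoms P) T -> lit_true T l).
    destruct (filter_ex good (list_prod V [true; false])) as [Ls HLs0].
    assert (HLs : forall l, In l Ls <-> In (fst l) V /\ good l).
    { intros [b bo]. pose proof (HLs0 (b, bo)) as E. pose proof (in_prod_iff V [true; false] b bo) as E2.
      simpl fst. destruct bo; simpl in E2; tauto. }
    exists (map rule_of Ls). split; [|split].
    + intros a Ha. unfold prog_atoms in Ha; apply in_flat_map in Ha as [r [Hr Ha]].
      apply in_map_iff in Hr as [l [<- Hl]]. apply HLs in Hl as [HlV _].
      destruct l as [b []]; simpl in Ha; destruct Ha as [<-|[]]; auto.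
    + intros r Hr. apply in_map_iff in Hr as [l [<- Hl]]. apply HLs in Hl as [HlV Hg].
      apply entails_iff; auto.
      * destruct l as [b []]; simpl; intros a [<-|[]]; apply Hincl; exact HlV.
      * intros T HT; apply rule_sat; apply Hg; auto.
    + intros ls Hne HV Hent.
      rewrite entails_iff in Hent; auto.
      2:{ intros a Ha. destruct (conj_atoms ls a Ha) as [l [Hl <-]]. apply Hincl, HV; auto. }
      assert (Hgood : forall l, In l ls -> In l Ls).
      { intros l Hl; apply HLs; split; [apply HV; auto|].
        intros T HT. apply (proj1 (conj_sat T ls) (Hent T HT)); auto. }
      assert (HP' : map rule_of Ls <> []).
      { destruct ls as [|l ls]; [congruence|]. intro Heq.
        assert (Hin : In (rule_of l) (map rule_of Ls)) by (apply in_map, Hgood; left; auto).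
        rewrite Heq in Hin; inversion Hin. }
      apply (entails_of_eq _ _ (fun a => In (a, true) Ls)); auto.
      * split; [split|split].
        -- auto.
        -- intros a Ha. apply in_app_iff; left. unfold prog_atoms; apply in_flat_map.
           exists (rule_of (a, true)); split; [apply in_map; exact Ha| simpl; auto].
        -- intros r Hr. apply in_map_iff in Hr as [l [<- Hl]].
           cut (lit_true (fun a => In (a, true) Ls) l).
           { intro Hc. split; [apply sat_hT|]; apply rule_sat; exact Hc. }
           destruct l as [b []]; unfold lit_true; simpl; [exact Hl|].
           intro Hbt. apply HLs in Hl as [_ Hl]. apply HLs in Hbt as [_ Hbt].
           destruct Hhas as [T1 HT1]. exact (Hl T1 HT1 (Hbt T1 HT1)).
        -- intros [H [Hsub [[a [Ha Hna]] Hmod]]].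
           specialize (Hmod (rule_of (a, true)) (in_map _ _ _ Ha)).
           destruct Hmod as [Hh _]. simpl in Hh. apply Hna. tauto.
      * intros T [_ [Hmod _]]. apply conj_sat. intros l Hl.
        apply rule_sat. apply (Hmod (rule_of l)). apply in_map, Hgood; auto.
Qed.
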